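(* Let $\alpha\in(0,1]$. Restrict to elections with exactly two alternatives and to metrics given by the 1-Euclidean space, meaning all agents and alternatives are points of $\mathbb R$ and $d(x,y)=|x-y|$. Then every deterministic voting rule $f$ using ranked preferences with intensities has, under mandatory elicitation, distortion at least $$\max\left(\frac{3-\alpha}{1+\alpha},\ 2\alpha+1\right).$$
   Context: An election $\mathcal E=(N,A,\vec\sigma)$ has agents $N$, alternatives $A$, and for each agent $i$ a preference $\sigma_i=(\pi_i,\Join_i)$. Here $\pi_i:[m]\to A$ is a bijection ($\pi_i(1)$ most preferred) and $\Join_i:[m-1]\to\{\succ,\succ\!\!\succ\}$. The profile $\vec\sigma$ is $\alpha$-consistent with $d$ (mandatory elicitation) if for all $i$ and $j\in[m-1]$: - $\Join_i(j)=\,\succ$ implies $d(i,\pi_i(j+1))\ge d(i,\pi_i(j))>\alpha d(i,\pi_i(j+1))$; - $\Join_i(j)=\,\succ\!\!\succ$ implies $d(i,\pi_i(j))\le\alpha d(i,\pi_i(j+1))$. In this setting the distortion of $a$ is $\mathsf{dist}_\alpha(a,\mathcal E)=\sup_d\sum_i d(i,a)/\min_b\sum_i d(i,b)$, where the supremum ranges over 1-Euclidean metrics $d$ with which $\vec\sigma$ is $\alpha$-consistent. The distortion of $f$ is the supremum of $\mathsf{dist}_\alpha(f(\vec\sigma),\mathcal E)$ over all two-alternative elections. *)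

(* Defs.v *)
From HB Require Import structures.
From mathcomp Require Import all_boot all_order all_algebra.
From mathcomp Require Import reals.
Set Implicit Arguments. Unset Strict Implicit. Unset Printing Implicit Defensive.
Import Order.TTheory GRing.Theory Num.Theory.
Local Open Scope ring_scope.

(* Intensity symbols: Weak is "≻", Strong is "≻≻". *)
Inductive intensity := Weak | Strong.

(* A preference sigma_i = (pi_i, join_i) over a finite set of alternatives A
   with m = #|A|: [rank] lists pi_i(1), ..., pi_i(m) (a bijection onto A,
   most preferred first) and [join] lists join_i(1), ..., join_i(m-1). *)
Record pref (A : finType) := Pref {
  rank : seq A;
  rank_perm : perm_eq rank (enum A);
  join : seq intensity;
  join_size : size join = (#|A|).-1 }.

(* alpha-consistency (mandatory elicitation) of a profile on agents 'I_n with
   a distance d(i, a) between agents and alternatives.  For j in [m-1]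
   (0-based index j with j+1 < m), x = pi_i(j), y = pi_i(j+1). *)
Definition consistent (R : realType) (alpha : R) (A : finType) (n : nat)
    (sigma : 'I_n -> pref A) (d : 'I_n -> A -> R) : Prop :=
  forall (i : 'I_n) (j : nat) (x0 : A), (j.+1 < #|A|)%N ->
    let x := nth x0 (rank (sigma i)) j in
    let y := nth x0 (rank (sigma i)) j.+1 in
    match nth Weak (join (sigma i)) j with
    | Weak => d i x <= d i y /\ alpha * d i y < d i x
    | Strong => d i x <= alpha * d i y
    end.

Definition euclid (R : realType) (n : nat) (A : finType)
    (xs : 'I_n -> R) (ys : A -> R) : 'I_n -> A -> R :=
  fun i a => `|xs i - ys a|.

Definition sc (R : realType) (n : nat) (A : finType) (d : 'I_n -> A -> R)
    (a : A) : R := \sum_(i < n) d i a.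

Definition rule2 := forall n : nat, ('I_n -> pref bool) -> bool.

(* Main.v *)
Require Import Defs.
From HB Require Import structures.
From mathcomp Require Import all_boot all_order all_algebra.
From mathcomp Require Import reals.
From mathcomp Require Import ring lra.
Import Order.TTheory GRing.Theory Num.Theory.
Local Open Scope ring_scope.

Lemma mkpref_perm (t : bool) : perm_eq [:: t; ~~ t] (@enum_mem bool (mem (@predT bool))).
Proof. by case: t; rewrite enumT unlock. Qed.

Lemma mkpref_size (k : intensity) : size [:: k] = (#|{: bool}|).-1.
Proof. by rewrite card_bool. Qed.

Definition mkpref (t : bool) (k : intensity) : pref bool :=
  Pref (mkpref_perm t) (mkpref_size k).

Definition sig2 (k : intensity) : 'I_2 -> pref bool :=
  fun i => mkpref (val i == 0%N) k.

Theorem theorem6 (R : realType) (alpha : R) (halpha : 0 < alpha <= 1)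
    (f : rule2) (eps : R) (heps : 0 < eps) :
  exists (n : nat) (sigma : 'I_n -> pref bool) (xs : 'I_n -> R) (ys : bool -> R),
    consistent alpha sigma (euclid xs ys) /\
    (Num.max ((3 - alpha) / (1 + alpha)) (2 * alpha + 1) - eps)
      * Num.min (sc (euclid xs ys) true) (sc (euclid xs ys) false)
    < sc (euclid xs ys) (f n sigma).
Proof.
case/andP: halpha => ha0 ha1.
have h1a : 0 < 1 + alpha by lra.
set L1 := (3 - alpha) / (1 + alpha).
have hL1 : L1 * (1 + alpha) = 3 - alpha by rewrite /L1 mulfVK //; lra.
have [hL|hL] := boolP (L1 <= 2 * alpha + 1).
-
  rewrite max_r //.
  have n1 : `|alpha - 0| = alpha by rewrite subr0 ger0_norm //; lra.
  have n2 : `|alpha - (1 + alpha)| = 1.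
    by rewrite (_ : alpha - (1 + alpha) = - 1) ?normrN ?normr1 //; lra.
  have n3 : `|1 + alpha - 0| = 1 + alpha by rewrite subr0 ger0_norm //; lra.
  have n4 : `|1 + alpha - (1 + alpha)| = 0 by rewrite subrr normr0.
  exists 2%N, (sig2 Strong).
  exists (fun i => if (val i == 0%N) == f 2%N (sig2 Strong) then alpha else 1 + alpha).
  exists (fun b => if b == f 2%N (sig2 Strong) then 0 else 1 + alpha).
  case: (f 2%N (sig2 Strong)); (split;
    [ move=> i j x0; rewrite card_bool; case: j => [|j] // _;
      case: i => [[|[|m]] hm] //=; rewrite /euclid /= ?n1 ?n2 ?n3 ?n4
    | rewrite /sc /euclid !big_ord_recl !big_ord0 /= ?n1 ?n2 ?n3 ?n4 ]).
  all: try (by split; lra).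
  all: try (by rewrite mulr1; lra).
  all: try (by apply: mulr_ge0; lra).
  all: try (by rewrite min_r; lra).
  all: try (by rewrite min_l; lra).
-
  rewrite -ltNge in hL; rewrite max_l; last exact: ltW.
  have hlt1 : alpha < 1.
    rewrite lt_neqAle ha1 andbT; apply/negP => /eqP ha.
    move: hL hL1; rewrite ha; lra.
  have h1m : 0 < 1 - alpha by lra.
  set q0 := 2 / (1 - alpha).
  have hq0 : q0 * (1 - alpha) = 2 by rewrite /q0 mulfVK //; lra.
  have hq0' : 2 <= q0.
    have : 2 * (1 - alpha) <= q0 * (1 - alpha) by rewrite hq0; lra.
    by rewrite ler_pM2r.
  have hL3 : L1 <= 3.
    have : L1 * (1 + alpha) <= 3 * (1 + alpha) by rewrite hL1; lra.
    by rewrite ler_pM2r.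
  have hLq : L1 * (q0 - 1) = q0 + 1.
    have e : (L1 * (q0 - 1)) * ((1 + alpha) * (1 - alpha))
             = (q0 + 1) * ((1 + alpha) * (1 - alpha)).
      have -> : L1 * (q0 - 1) * ((1 + alpha) * (1 - alpha))
        = (L1 * (1 + alpha)) * (q0 * (1 - alpha)) - (L1 * (1 + alpha)) * (1 - alpha) by ring.
      rewrite hL1 hq0.
      have -> : (q0 + 1) * ((1 + alpha) * (1 - alpha))
        = (q0 * (1 - alpha)) * (1 + alpha) + (1 + alpha) * (1 - alpha) by ring.
      rewrite hq0; ring.
    apply: (mulIf _ e); apply: lt0r_neq0; exact: mulr_gt0.
  set q := q0 + eps / 4.
  have he4 : 0 < eps / 4 by apply: divr_gt0; lra.
  have hq2 : 2 < q by rewrite /q; lra.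
  have hqa : alpha * q < q - 2.
    have : (1 - alpha) * (eps / 4) > 0 by apply: mulr_gt0.
    have : q0 - alpha * q0 = 2 by rewrite -hq0; ring.
    rewrite /q; lra.
  have hmain : (L1 - eps) * (q - 1) < q + 1.
    have -> : (L1 - eps) * (q - 1) = L1 * (q0 - 1) + L1 * (eps / 4) - eps * (q - 1)
      by rewrite /q; ring.
    rewrite hLq.
    have : L1 * (eps / 4) <= 3 * (eps / 4) by rewrite ler_pM2r.
    have : eps <= eps * (q - 1) by rewrite ler_peMr; lra.
    rewrite /q; lra.
  have m1 : `|1 - 0| = 1 :> R by rewrite subr0 normr1.
  have m2 : `|1 - 2| = 1 :> R.
    by rewrite (_ : 1 - 2 = - 1 :> R) ?normrN ?normr1 //; lra.
  have m3 : `|q - 0| = q by rewrite subr0 ger0_norm //; lra.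
  have m4 : `|q - 2| = q - 2 by rewrite ger0_norm //; lra.
  exists 2%N, (sig2 Weak).
  exists (fun i => if (val i == 0%N) == f 2%N (sig2 Weak) then 1 else q).
  exists (fun b => if b == f 2%N (sig2 Weak) then 0 else 2).
  case: (f 2%N (sig2 Weak)); (split;
    [ move=> i j x0; rewrite card_bool; case: j => [|j] // _;
      case: i => [[|[|m]] hm] //=; rewrite /euclid /= ?m1 ?m2 ?m3 ?m4
    | rewrite /sc /euclid !big_ord_recl !big_ord0 /= ?m1 ?m2 ?m3 ?m4 ]).
  all: try (by split; lra).
  all: try (by rewrite min_r; lra).
  all: try (by rewrite min_l; lra).
Qed.
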